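(* Let $T,L$ be positive integers and $\epsilon\in(0,1)$. For $\rho=\{\rho_t^l\}\in[0,1]^{T\times L}$ let $F(\rho)=\sum_{t,l}\rho_t^l r_t^l b_t^l(\rho_t^l)$, $G(\rho)=1-\prod_{t=1}^T\prod_{l=1}^L\rho_t^l$, $H(\rho)=\sum_{t,l}(1-\rho_t^l)$. Let $\rho^\ast$ be an optimal solution of PA1: $\min F(\rho)$ s.t. $G(\rho)\le\epsilon$, $\rho\in[0,1]^{T\times L}$. Let $\tilde\lambda,\tilde\rho$ be optimal solutions of $\max_{\lambda\ge0}\min_{\rho\in[0,1]^{T\times L}}\{F(\rho)+\lambda[H(\rho)-\epsilon]\}$. Then $$0\le F(\tilde\rho)-F(\rho^\ast)\le\tilde\lambda\,(TL-1)\epsilon.$$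
   Context: For each $t\in\{1,\dots,T\}$, $l\in\{1,\dots,L\}$: $r_t^l$ is a positive integer and $b_t^l:[0,1]\to[0,b^l_{\max}]$ is strictly increasing and convex. $\rho_t^l$ is the probability of the event of successfully recruiting $r_t^l$ participants at time $t$, location $l$, and these events are independent. PA2 denotes the problem $\min F(\rho)$ s.t. $H(\rho)\le\epsilon$, $\rho\in[0,1]^{T\times L}$, so $F(\tilde\rho)$ is the optimal value of PA2. *)

(* Defs.v *)
From HB Require Import structures.
From mathcomp Require Import all_boot all_order all_algebra.
From mathcomp Require Import reals.
Set Implicit Arguments. Unset Strict Implicit. Unset Printing Implicit Defensive.
Import Order.TTheory GRing.Theory Num.Theory.
Local Open Scope ring_scope.

Definition in_box (R : realType) (T L : nat) (rho : 'I_T -> 'I_L -> R) : Prop :=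
  forall t l, 0 <= rho t l <= 1.

Definition Fobj (R : realType) (T L : nat) (r : 'I_T -> 'I_L -> nat)
  (b : 'I_T -> 'I_L -> R -> R) (rho : 'I_T -> 'I_L -> R) : R :=
  \sum_(t < T) \sum_(l < L) rho t l * (r t l)%:R * b t l (rho t l).

Definition Gfun (R : realType) (T L : nat) (rho : 'I_T -> 'I_L -> R) : R :=
  1 - \prod_(t < T) \prod_(l < L) rho t l.

Definition Hfun (R : realType) (T L : nat) (rho : 'I_T -> 'I_L -> R) : R :=
  \sum_(t < T) \sum_(l < L) (1 - rho t l).

Definition Lagr (R : realType) (T L : nat) (r : 'I_T -> 'I_L -> nat)
  (b : 'I_T -> 'I_L -> R -> R) (eps lam : R) (rho : 'I_T -> 'I_L -> R) : R :=
  Fobj r b rho + lam * (Hfun rho - eps).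

Definition strictly_incr01 (R : realType) (f : R -> R) : Prop :=
  forall x y, 0 <= x -> x < y -> y <= 1 -> f x < f y.

Definition convex01 (R : realType) (f : R -> R) : Prop :=
  forall x y a, 0 <= x <= 1 -> 0 <= y <= 1 -> 0 <= a <= 1 ->
    f (a * x + (1 - a) * y) <= a * f x + (1 - a) * f y.

(* Main.v *)
Require Import Defs.
From HB Require Import structures.
From mathcomp Require Import all_boot all_order all_algebra.
From mathcomp Require Import reals.
From mathcomp Require Import ring lra.
Import Order.TTheory GRing.Theory Num.Theory.
Local Open Scope ring_scope.

Definition Qc (R : realType) (T L : nat) (r : 'I_T -> 'I_L -> nat)
  (b : 'I_T -> 'I_L -> R -> R) (lam : R) (rho : 'I_T -> 'I_L -> R) t l : R :=
  rho t l * (r t l)%:R * b t l (rho t l) + lam * (1 - rho t l).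
Arguments Qc {R T L}.

Lemma LagrE (R : realType) (T L : nat) (r : 'I_T -> 'I_L -> nat)
  (b : 'I_T -> 'I_L -> R -> R) eps lam rho :
  Lagr r b eps lam rho = \sum_(t < T) \sum_(l < L) Qc r b lam rho t l - lam * eps.
Proof.
rewrite /Lagr /Fobj /Hfun mulrBr addrA; congr (_ - _).
rewrite mulr_sumr -big_split; apply: eq_bigr => t _.
by rewrite mulr_sumr -big_split.
Qed.

Lemma H_diff (R : realType) (T L : nat) (rho rho' : 'I_T -> 'I_L -> R) :
  Hfun rho - Hfun rho' = \sum_(t < T) \sum_(l < L) (rho' t l - rho t l).
Proof.
rewrite /Hfun -sumrB; apply: eq_bigr => t _; rewrite -sumrB; apply: eq_bigr => l _.
by ring.
Qed.

Lemma sum3 (R : realType) (T L : nat) (A B C : 'I_T -> 'I_L -> R) :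
  \sum_(t < T) \sum_(l < L) A t l + \sum_(t < T) \sum_(l < L) B t l
   - 2 * \sum_(t < T) \sum_(l < L) C t l =
  \sum_(t < T) \sum_(l < L) (A t l + B t l - 2 * C t l).
Proof.
rewrite mulr_sumr -big_split -sumrB; apply: eq_bigr => t _.
by rewrite mulr_sumr -big_split -sumrB.
Qed.
Lemma mono_prod (R : realType) (f : R -> R) x y : strictly_incr01 f ->
  0 <= x <= 1 -> 0 <= y <= 1 -> 0 <= (y - x) * (f y - f x).
Proof.
move=> hf /andP[x0 x1] /andP[y0 y1].
case: (ltgtP x y) => [xy|yx|->]; last by rewrite subrr mul0r.
- have := hf x y x0 xy y1; nra.
- have := hf y x y0 yx x1; nra.
Qed.

Lemma mono_le (R : realType) (f : R -> R) x y : strictly_incr01 f ->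
  0 <= x -> x <= y -> y <= 1 -> f x <= f y.
Proof.
move=> hf x0 xy y1; case: (ltgtP x y) xy => // [xy _|-> _]; last by [].
exact: ltW (hf x y x0 xy y1).
Qed.

Lemma mid_gap (R : realType) (f : R -> R) x y : convex01 f ->
  0 <= x <= 1 -> 0 <= y <= 1 ->
  (y - x) * (f y - f x) / 2 <= x * f x + y * f y - 2 * ((x + y) / 2 * f ((x + y) / 2)).
Proof.
move=> hc hx hy.
have h2 : 0 <= (2^-1 : R) <= 1 by apply/andP; split; lra.
have := hc x y 2^-1 hx hy h2.
have -> : 2^-1 * x + (1 - 2^-1) * y = (x + y) / 2 by field.
set m := f _ => hm.
have /andP[x0 _] := hx; have /andP[y0 _] := hy.
have hxy : 0 <= x + y by lra.
have := ler_wpM2l hxy hm.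
have -> : 2 * ((x + y) / 2 * m) = (x + y) * m by field.
move=> h.
suff : (y - x) * (f y - f x) / 2 = x * f x + y * f y - (x + y) * (2^-1 * f x + (1 - 2^-1) * f y) by lra.
by field.
Qed.
Lemma sum2_ge_term (R : realType) (T L : nat) (f : 'I_T -> 'I_L -> R) t l :
  (forall t l, 0 <= f t l) -> f t l <= \sum_(t0 < T) \sum_(l0 < L) f t0 l0.
Proof.
move=> h. rewrite (bigD1 t) //= (bigD1 l) //= -addrA lerDl.
by rewrite addr_ge0 // ?sumr_ge0 // => i _; rewrite sumr_ge0.
Qed.
Lemma sum2_le_const (R : realType) (T L : nat) (f : 'I_T -> 'I_L -> R) c :
  (forall t l, f t l <= c) -> \sum_(t0 < T) \sum_(l0 < L) f t0 l0 <= (T * L)%:R * c.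
Proof.
move=> h. apply: le_trans (_ : \sum_(t0 < T) \sum_(l0 < L) c <= _).
  by apply: ler_sum => t _; apply: ler_sum => l _.
by rewrite !sumr_const !card_ord -mulrnA mulr_natl mulnC.
Qed.
Lemma prod_sum_le (R : realType) (I : Type) (s : seq I) (Pp : pred I) (P S : I -> R) :
  (forall i, 0 <= P i <= 1) -> (forall i, 1 - P i <= S i) ->
  0 <= \prod_(i <- s | Pp i) P i <= 1 /\ 1 - \prod_(i <- s | Pp i) P i <= \sum_(i <- s | Pp i) S i.
Proof.
move=> hP hS; elim: s => [|x s [/andP[h0 h1] h2]].
  by rewrite !big_nil; split; [rewrite ler01 lexx | rewrite subrr].
rewrite !big_cons; case: (Pp x); last by split => //; apply/andP.
have /andP[x0 x1] := hP x; have := hS x => hx.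
split; first by apply/andP; split; nra.
nra.
Qed.
Lemma prod01 (R : realType) (I : Type) (s : seq I) (Pp : pred I) (P : I -> R) :
  (forall i, 0 <= P i <= 1) -> 0 <= \prod_(i <- s | Pp i) P i <= 1.
Proof. by move=> hP; case: (@prod_sum_le R I s Pp P (fun i => 1 - P i) hP _). Qed.
Lemma prod2_le_factor (R : realType) (T L : nat) (f : 'I_T -> 'I_L -> R) t l :
  (forall t l, 0 <= f t l <= 1) -> \prod_(t0 < T) \prod_(l0 < L) f t0 l0 <= f t l.
Proof.
move=> h. rewrite (bigD1 t) //= (bigD1 l) //=.
have /andP[a0 a1] := prod01 _ _ (index_enum _) (fun l0 => l0 != l) (f t) (h t).
have /andP[b0 b1] := prod01 _ _ (index_enum _) (fun t0 => t0 != t) (fun t0 => \prod_(l0 < L) f t0 l0) (fun t0 => prod01 _ _ (index_enum _) xpredT (f t0) (h t0)).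
have /andP[f0 f1] := h t l.
rewrite -mulrA; apply: ler_piMr => //; first by apply: mulr_ile1.
Qed.
Lemma G_le_H (R : realType) (T L : nat) (f : 'I_T -> 'I_L -> R) :
  (forall t l, 0 <= f t l <= 1) ->
  1 - \prod_(t0 < T) \prod_(l0 < L) f t0 l0 <= \sum_(t0 < T) \sum_(l0 < L) (1 - f t0 l0).
Proof.
move=> h.
have := @prod_sum_le _ _ (index_enum 'I_T) xpredT (fun t0 => \prod_(l0 < L) f t0 l0)
  (fun t0 => \sum_(l0 < L) (1 - f t0 l0)).
case.
- by move=> t0; exact: prod01.
- move=> t0; case: (@prod_sum_le _ _ (index_enum 'I_L) xpredT (f t0) (fun l0 => 1 - f t0 l0) (h t0)) => //.
- by [].
Qed.

Arguments prod2_le_factor {R T L f}.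
Arguments mono_prod {R f x y}.
Arguments mono_le {R f x y}.
Arguments mid_gap {R f x y}.
Arguments sum2_ge_term {R T L f}.
Arguments sum2_le_const {R T L f}.
Arguments G_le_H {R T L f}.
Arguments H_diff {R T L}.
Arguments LagrE {R T L}.
Arguments sum3 {R T L}.

Theorem theorem2 (R : realType) (T L : nat) (eps : R)
  (r : 'I_T -> 'I_L -> nat) (bmax : 'I_L -> R) (b : 'I_T -> 'I_L -> R -> R)
  (rho_star rho_t : 'I_T -> 'I_L -> R) (lam_t : R) :
  (0 < T)%N -> (0 < L)%N -> 0 < eps -> eps < 1 ->
  (forall t l, (0 < r t l)%N) ->
  (forall t l x, 0 <= x <= 1 -> 0 <= b t l x <= bmax l) ->
  (forall t l, strictly_incr01 (b t l)) ->
  (forall t l, convex01 (b t l)) ->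
  (* rho_star is an optimal solution of PA1 *)
  in_box rho_star -> Gfun rho_star <= eps ->
  (forall rho, in_box rho -> Gfun rho <= eps ->
     Fobj r b rho_star <= Fobj r b rho) ->
  (* rho_t minimizes the Lagrangian at lam_t *)
  0 <= lam_t -> in_box rho_t ->
  (forall rho, in_box rho -> Lagr r b eps lam_t rho_t <= Lagr r b eps lam_t rho) ->
  (* lam_t maximizes the dual function lam |-> inf_rho Lagr lam rho over lam >= 0 *)
  (forall lam, 0 <= lam -> forall delta, 0 < delta ->
     exists rho, in_box rho /\ Lagr r b eps lam rho < Lagr r b eps lam_t rho_t + delta) ->
  (* F(rho_t) is the optimal value (infimum) of PA2 (as stated in the context) *)
  (forall rho, in_box rho -> Hfun rho <= eps -> Fobj r b rho_t <= Fobj r b rho) ->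
  (forall delta, 0 < delta -> exists rho, in_box rho /\ Hfun rho <= eps /\
     Fobj r b rho < Fobj r b rho_t + delta) ->
  0 <= Fobj r b rho_t - Fobj r b rho_star <=
    lam_t * ((T * L)%:R - 1) * eps.
Proof.
move=> hT hL he0 he1 hr hbnd hinc hcvx bs hGs optS hlam bt minL dual _ dens.
set Nn : R := (T * L)%:R.
have hN : 0 < Nn by rewrite ltr0n muln_gt0 hT hL.
have low : Fobj r b rho_star <= Fobj r b rho_t.
  rewrite leNgt; apply/negP => hlt.
  have [rho [br [hH hF]]] := dens (Fobj r b rho_star - Fobj r b rho_t) ltac:(by rewrite subr_gt0).
  have hG : Gfun rho <= eps by rewrite /Gfun; apply: le_trans hH; exact: G_le_H br.
  have := optS rho br hG; lra.
have Hs : Hfun rho_star <= Nn * eps.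
  apply: sum2_le_const => t l.
  have := prod2_le_factor t l bs; rewrite /Gfun in hGs; lra.
have lag := minL _ bs; rewrite /Lagr in lag.
have key : 0 < lam_t -> eps <= Hfun rho_t.
  move=> lpos; rewrite leNgt; apply/negP => hlt.
  set g := eps - Hfun rho_t.
  have gpos : 0 < g by rewrite subr_gt0.
  set d0 := g / (4 * Nn).
  have d0pos : 0 < d0 by rewrite divr_gt0 // mulr_gt0.
  have hNd : Nn * d0 = g / 4.
    by rewrite /d0; field; rewrite !pnatr_eq0 -!lt0n hL hT.
  set kap := fun t l => if d0 <= rho_t t l then
     (r t l)%:R * (d0 * (b t l (rho_t t l) - b t l (rho_t t l - d0))) / 2 else 1.
  have kpos : forall t l, 0 < kap t l.
    move=> t l; rewrite /kap; case: ifP => // hd.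
    have /andP[_ r1] := bt t l.
    have := hinc t l (rho_t t l - d0) (rho_t t l) ltac:(lra) ltac:(lra) r1.
    have : 0 < (r t l)%:R :> R by rewrite ltr0n.
    move=> h1 h2; apply: divr_gt0 => //; apply: mulr_gt0 => //; apply: mulr_gt0 => //; lra.
  set S := \sum_(t < T) \sum_(l < L) (kap t l)^-1.
  have kS : forall t l, (kap t l)^-1 <= S.
    by move=> t l; apply: sum2_ge_term => t0 l0; rewrite invr_ge0 ltW.
  have Spos : 0 < S.
    apply: lt_le_trans (kS (Ordinal hT) (Ordinal hL)); by rewrite invr_gt0.
  set kk := S^-1.
  have kkpos : 0 < kk by rewrite invr_gt0.
  have kkle : forall t l, kk <= kap t l.
    move=> t l; rewrite /kk -[kap t l]invrK ler_pV2 ?inE ?unitfE ?invr_gt0 ?kpos ?gt_eqF //.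
    all: try by rewrite ?invr_gt0 ?kpos ?kS.
  set s := Num.min lam_t (kk / (g / 2 + Nn)).
  have hgN : 0 < g / 2 + Nn by lra.
  have spos : 0 < s by rewrite lt_min lpos divr_gt0.
  have sle : s <= lam_t by rewrite ge_min lexx.
  have sk : s * (g / 2 + Nn) <= kk.
    have : s <= kk / (g / 2 + Nn) by rewrite ge_min lexx orbT.
    by rewrite ler_pdivlMr.
  have [rho [br hr2]] := dual (lam_t - s) ltac:(lra) (s * (g / 2)) ltac:(apply: mulr_gt0; lra).
  have e1 : Lagr r b eps (lam_t - s) rho = Lagr r b eps lam_t rho - s * (Hfun rho - eps).
    by rewrite /Lagr; ring.
  rewrite e1 in hr2.
  have m1 := minL _ br.
  have hHr : Hfun rho - eps > - (g / 2) by nra.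
  have hHN : Hfun rho <= Nn * 1.
    apply: sum2_le_const => t l; have /andP[a0 a1] := br t l; lra.
  have up : Lagr r b eps lam_t rho < Lagr r b eps lam_t rho_t + kk by nra.
  case: (boolP [exists t, [exists l, d0 <= rho_t t l - rho t l]]); last first.
    move=> /existsPn hn.
    have : Hfun rho - Hfun rho_t <= Nn * d0.
      rewrite H_diff; apply: sum2_le_const => t l.
      have /existsPn := hn t => /(_ l); rewrite -ltNge => /ltW //.
    have gdef : g = eps - Hfun rho_t by [].
    rewrite hNd; lra.
  move=> /existsP [t /existsP [l hi]].
  set m := fun t l => (rho t l + rho_t t l) / 2.
  have bm : in_box m.
    move=> t0 l0; have /andP[a0 a1] := br t0 l0; have /andP[c0 c1] := bt t0 l0.
    rewrite /m; apply/andP; split; lra.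
  have m2 := minL _ bm.
  set D := fun t l => (r t l)%:R * ((rho_t t l - rho t l) * (b t l (rho_t t l) - b t l (rho t l))) / 2.
  have Dge : forall t l, 0 <= D t l.
    move=> t0 l0; rewrite /D; apply: divr_ge0 => //; apply: mulr_ge0 => //.
    exact: mono_prod (hinc t0 l0) (br t0 l0) (bt t0 l0).
  have gap : \sum_(t < T) \sum_(l < L) D t l <=
      Lagr r b eps lam_t rho + Lagr r b eps lam_t rho_t - 2 * Lagr r b eps lam_t m.
    have -> : Lagr r b eps lam_t rho + Lagr r b eps lam_t rho_t - 2 * Lagr r b eps lam_t m
       = \sum_(t < T) \sum_(l < L) Qc r b lam_t rho t l + \sum_(t < T) \sum_(l < L) Qc r b lam_t rho_t t l
         - 2 * \sum_(t < T) \sum_(l < L) Qc r b lam_t m t l.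
      by rewrite !LagrE; ring.
    rewrite sum3; apply: ler_sum => t0 _; apply: ler_sum => l0 _.
    have := mid_gap (hcvx t0 l0) (br t0 l0) (bt t0 l0).
    rewrite /D /Qc /m.
    set x := rho t0 l0; set y := rho_t t0 l0; set rr := (r t0 l0)%:R.
    set fx := b t0 l0 x; set fy := b t0 l0 y; set fm := b t0 l0 ((x + y) / 2).
    have rpos : 0 < rr by rewrite ltr0n.
    move=> h.
    have h' := ler_wpM2l (ltW rpos) h.
    have E1 : rr * ((y - x) * (fy - fx)) / 2 = rr * ((y - x) * (fy - fx) / 2) by ring.
    have E2 : x * rr * fx + lam_t * (1 - x) + (y * rr * fy + lam_t * (1 - y)) -
        2 * ((x + y) / 2 * rr * fm + lam_t * (1 - (x + y) / 2))
        = rr * (x * fx + y * fy - 2 * ((x + y) / 2 * fm)) by field.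
    by rewrite E1 E2.
  have Dk : kap t l <= D t l.
    have /andP[a0 a1] := br t l; have /andP[c0 c1] := bt t l.
    rewrite /kap ifT; last by lra.
    rewrite /D ler_pM2r ?invr_gt0 ?ltr0n // ler_pM2l ?ltr0n //.
    have hb := mono_le (hinc t l) a0 (_ : rho t l <= rho_t t l - d0) (_ : rho_t t l - d0 <= 1).
    have hb' := hb ltac:(lra) ltac:(lra).
    have := hinc t l (rho_t t l - d0) (rho_t t l) ltac:(lra) ltac:(lra) c1.
    move=> h3; apply: ler_pM; lra.
  have := sum2_ge_term t l Dge.
  have := kkle t l.
  lra.
apply/andP; split; first lra.
have : lam_t * (Hfun rho_star - Hfun rho_t) <= lam_t * (Nn * eps - eps).
  case: (ltgtP lam_t 0) hlam => // [lp _|-> _]; last by rewrite !mul0r.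
  apply: ler_wpM2l; first exact: ltW.
  have := key lp; lra.
move=> h; rewrite /Nn in h Hs.
have -> : lam_t * ((T * L)%:R - 1) * eps = lam_t * ((T * L)%:R * eps - eps) by ring.
lra.
Qed.
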